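(* Let $P=\{(u_1,v_1),\ldots,(u_n,v_n)\}\subseteq\{a,b\}^*\times\{a,b\}^*$ with $n\ge3$ have no solution as an instance of Restricted PCP, and let $W=W_0\cup\cdots\cup W_{15}$ be constructed from $P$ as in the context. Then for every cycle $Q$ of $W$, the componentwise product $Q$ in $F(\Gamma)\times F(\Gamma)$ is not equal to $(\varepsilon,\varepsilon)$.
   Context: For a set $H$, $F(H)$ denotes the free group on $H$; $\varepsilon$ is its identity (the empty word), and pairs of elements of free groups are multiplied componentwise. Restricted PCP: given $P=\{(u_1,v_1),\ldots,(u_n,v_n)\}\subseteq\{a,b\}^*\times\{a,b\}^*$ with $n\ge3$, a solution is a finite (possibly empty) sequence $l_1,\ldots,l_k$ with $2\le l_i\le n-1$ such that $u_1u_{l_1}\cdots u_{l_k}u_n=v_1v_{l_1}\cdots v_{l_k}v_n$. Construction of $W$. Let $\Gamma_i=\{a_i,b_i\}$ for $1\le i\le4$ and $\Gamma_B=\{x_1,\ldots,x_8\}$ be pairwise disjoint sets of letters, and $\Gamma=\Gamma_1\cup\Gamma_2\cup\Gamma_3\cup\Gamma_4\cup\Gamma_B$. Let $\delta_i:F(\{a,b\})\to F(\Gamma_i)$ be the homomorphism with $\delta_i(a)=a_i$, $\delta_i(b)=b_i$, and set $u_{ik}=\delta_i(u_k)$, $v_{ik}=\delta_i(v_k)$. For a positive integer $j$ let $\phi_i(j)=a_i^jb_i$ and $\psi_i(j)=(a_i^{-1})^jb_i^{-1}$. Put $x_0:=x_8$. For $p=1,2,3,4$ define $W_{4(p-1)}=\{(x_{2p-2}\,v_{p1}^{-1}u_{p1}\,x_{2p-1}^{-1},\;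 x_{2p-2}\,b_p\,x_{2p-1}^{-1})\}$, $W_{4(p-1)+1}=\{(x_{2p-1}\,u_{pj}\,x_{2p-1}^{-1},\; x_{2p-1}\,\phi_p(j)\,x_{2p-1}^{-1}) : 2\le j\le n-1\}$, $W_{4(p-1)+2}=\{(x_{2p-1}\,u_{pn}v_{pn}^{-1}\,x_{2p}^{-1},\; x_{2p-1}\,b_p^{-1}\,x_{2p}^{-1})\}$, $W_{4(p-1)+3}=\{(x_{2p}\,v_{pj}^{-1}\,x_{2p}^{-1},\; x_{2p}\,\psi_p(j)\,x_{2p}^{-1}) : 2\le j\le n-1\}$, and $W=W_0\cup W_1\cup\cdots\cup W_{15}$. A cycle of $W$ is a product $w_i\,w_{(i+1)\bmod 16}\cdots w_{(i+15)\bmod16}$ for some $0\le i\le15$, where $w_y\in W_y$ (a single pair) when $y$ is even and $w_y$ is a (possibly empty) finite product of pairs from $W_y$ when $y$ is odd. *)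

(* Defs.v *)
From mathcomp Require Import all_boot.
Set Implicit Arguments. Unset Strict Implicit. Unset Printing Implicit Defensive.

(* Letters of Gamma are encoded as pairs (kind, index):
   a_i = (0,i), b_i = (1,i), x_k = (2,k). *)
Definition gam := (nat * nat)%type.
(* A signed letter: (g, false) is g, (g, true) is g^{-1}. *)
Definition letter := (gam * bool)%type.
Definition word := seq letter.

Definition linv (x : letter) : letter := (x.1, ~~ x.2).

Fixpoint red (w : word) : word :=
  if w is x :: w' then
    let r := red w' in
    if r is y :: r' then (if y == linv x then r' else x :: r) else [:: x]
  else [::].

(* Elements of the free group are represented by words; the group element of
   a word w is its reduced form red w. The identity epsilon is [::]. *)
Definition fmul (u v : word) : word := red (u ++ v).
Definition finv (w : word) : word := rev (map linv w).
Definition fprod (ws : seq word) : word := foldr fmul [::] ws.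
Definition fgen (g : gam) : word := [:: (g, false)].

Definition a_ (i : nat) : word := fgen (0, i).
Definition b_ (i : nat) : word := fgen (1, i).
Definition x_ (k : nat) : word := fgen (2, if k == 0 then 8 else k).

Inductive ab := ab_a | ab_b.

Section PCP.
Variable P : seq (seq ab * seq ab).
Definition pn := size P.
(* 1-based access: u k = u_k, v k = v_k *)
Definition pu (k : nat) : seq ab := nth [::] (map fst P) k.-1.
Definition pv (k : nat) : seq ab := nth [::] (map snd P) k.-1.

Definition rpcp_solution (l : seq nat) : Prop :=
  all (fun k => (2 <= k) && (k <= pn - 1)) l /\
  pu 1 ++ flatten (map pu l) ++ pu pn = pv 1 ++ flatten (map pv l) ++ pv pn.

Definition delta (i : nat) (w : seq ab) : word :=
  fprod (map (fun c => match c with ab_a => a_ i | ab_b => b_ i end) w).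

Definition phi (i j : nat) : word := fprod (nseq j (a_ i) ++ [:: b_ i]).
Definition psi (i j : nat) : word := fprod (nseq j (finv (a_ i)) ++ [:: finv (b_ i)]).

Definition upj (p j : nat) := delta p (pu j).
Definition vpj (p j : nat) := delta p (pv j).

(* W_y for 0 <= y <= 15, with y = 4(p-1) + r *)
Definition Wset (y : nat) : seq (word * word) :=
  let p := y %/ 4 + 1 in
  match y %% 4 with
  | 0 => [:: (fprod [:: x_ (2*p-2); finv (vpj p 1); upj p 1; finv (x_ (2*p-1))],
              fprod [:: x_ (2*p-2); b_ p; finv (x_ (2*p-1))])]
  | 1 => [seq (fprod [:: x_ (2*p-1); upj p j; finv (x_ (2*p-1))],
               fprod [:: x_ (2*p-1); phi p j; finv (x_ (2*p-1))]) | j <- iota 2 (pn - 2)]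
  | 2 => [:: (fprod [:: x_ (2*p-1); upj p pn; finv (vpj p pn); finv (x_ (2*p))],
              fprod [:: x_ (2*p-1); finv (b_ p); finv (x_ (2*p))])]
  | _ => [seq (fprod [:: x_ (2*p); finv (vpj p j); finv (x_ (2*p))],
               fprod [:: x_ (2*p); psi p j; finv (x_ (2*p))]) | j <- iota 2 (pn - 2)]
  end.

Definition pairprod (ws : seq (word * word)) : word * word :=
  (fprod (map fst ws), fprod (map snd ws)).

Definition is_cycle (Q : word * word) : Prop :=
  exists (i : nat) (ws : nat -> seq (word * word)),
    i < 16 /\
    (forall y, y < 16 -> all (fun w => w \in Wset y) (ws y) /\
                        (~~ odd y -> size (ws y) = 1)) /\
    Q = pairprod [seq pairprod (ws ((i + k) %% 16)) | k <- iota 0 16].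
End PCP.

(* Main.v *)
Require Import Defs.
From mathcomp Require Import all_boot.
Import Defs.
Set Implicit Arguments. Unset Strict Implicit. Unset Printing Implicit Defensive.

Definition push (x : letter) (r : word) : word :=
  if r is y :: r' then (if y == linv x then r' else x :: r) else [:: x].

Lemma redE x w : red (x :: w) = push x (red w). Proof. by []. Qed.

Fixpoint reduced (w : word) : bool :=
  if w is x :: w' then (if w' is y :: _ then y != linv x else true) && reduced w' else true.

Lemma linvK x : linv (linv x) = x. Proof. by case: x => g b; rewrite /linv /= negbK. Qed.

Lemma reduced_push x r : reduced r -> reduced (push x r).
Proof.
case: r => [|y r] //= /andP [H1 H2].
case: ifP => [_|/negbT Hy] //=.
by rewrite Hy H1 H2.
Qed.

Lemma reduced_red w : reduced (red w).
Proof. elim: w => [|x w IH] //; rewrite redE; exact: reduced_push. Qed.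

Lemma red_reduced w : reduced w -> red w = w.
Proof.
elim: w => [|x w IH] // Hr; rewrite redE.
move: Hr => /= /andP [H1 H2]; rewrite IH //.
case: w H1 {IH H2} => [|y w] //= H1.
by rewrite (negbTE H1).
Qed.

Lemma push_cancel x r : reduced r -> push x (push (linv x) r) = r.
Proof.
case: r => [|y r] /= Hr; first by rewrite eqxx.
case: eqP => [E|_]; last by rewrite /= eqxx.
rewrite linvK in E; subst y.
case: r Hr => [|z r] //= /andP [H1 _].
by rewrite (negbTE H1).
Qed.

Lemma push_cancel' x r : reduced r -> push (linv x) (push x r) = r.
Proof. by have := @push_cancel (linv x) r; rewrite linvK. Qed.

Definition act (u r : word) := foldr push r u.

Lemma red_cat u v : red (u ++ v) = act u (red v).
Proof. by elim: u => [|x u IH] //; rewrite cat_cons redE IH. Qed.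

Lemma reduced_act u r : reduced r -> reduced (act u r).
Proof. elim: u => [|x u IH] //= Hr; apply: reduced_push; exact: IH. Qed.

Lemma act_push x s r : reduced s -> reduced r -> act (push x s) r = push x (act s r).
Proof.
case: s => [|y s] //= Hs Hr.
case: eqP => [->|_] //=.
rewrite push_cancel //; apply: reduced_act => //; by move: Hs => /= /andP [].
Qed.

Lemma act_red u r : reduced r -> act (red u) r = act u r.
Proof.
elim: u => [|x u IH] Hr //. rewrite redE act_push ?reduced_red // IH //.
Qed.

Lemma redK w : red (red w) = red w. Proof. exact/red_reduced/reduced_red. Qed.
Lemma red_catr u v : red (u ++ red v) = red (u ++ v). Proof. by rewrite !red_cat redK. Qed.
Lemma red_catl u v : red (red u ++ v) = red (u ++ v).
Proof. by rewrite !red_cat act_red // reduced_red. Qed.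

Lemma fprodE (ls : seq word) : fprod ls = red (flatten ls).
Proof. elim: ls => [|w ls IH] //=. by rewrite /fmul IH red_catr. Qed.

Lemma red_flatten_red ls : red (flatten (map red ls)) = red (flatten ls).
Proof. elim: ls => [|l ls IH] //=. by rewrite red_catl -red_catr IH red_catr. Qed.

Lemma finv_cons x A : finv (x :: A) = finv A ++ [:: linv x].
Proof. by rewrite /finv /= rev_cons cats1. Qed.
Lemma finv_cat A B : finv (A ++ B) = finv B ++ finv A.
Proof. by rewrite /finv map_cat rev_cat. Qed.

Lemma red_finvK A X : red (finv A ++ (A ++ X)) = red X.
Proof.
elim: A X => [|x A IH] X //.
rewrite finv_cons -catA cat_cons /= red_cat !redE push_cancel' ?reduced_red //.
by rewrite -red_cat IH.
Qed.

Lemma red_conj A B : red (A ++ B) = [::] -> red (B ++ A) = [::].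
Proof.
move=> H. rewrite -(red_finvK A (B ++ A)) red_cat catA -red_catl H /= -red_cat.
by rewrite -{2}(cats0 A) red_finvK.
Qed.

Definition pos (w : word) := all (fun x => ~~ x.2) w.
Lemma pos_reduced w : pos w -> reduced w.
Proof.
elim: w => [|x w IH] //= /andP [Hx Hw]. rewrite IH // andbT.
case: w Hw {IH} => [|y w] //= /andP [Hy _].
apply: contraTneq Hy => ->. by rewrite /linv /= negbK.
Qed.

Lemma pos_eq U V : pos U -> pos V -> red (U ++ finv V) = [::] -> U = V.
Proof.
move=> HU HV H.
have E1 : red ((U ++ finv V) ++ V) = red V by rewrite -red_catl H.
have E2 : red (U ++ (finv V ++ V)) = red U.
  have H0 := red_finvK V [::]; rewrite cats0 in H0.
  by rewrite red_cat H0 -red_cat cats0.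
rewrite -(red_reduced (pos_reduced HU)) -(red_reduced (pos_reduced HV)).
by rewrite -E2 catA E1.
Qed.
Arguments red : simpl never.

Definition f1 (x : letter) : bool := (x.1.1 < 2) && (x.1.2 == 1).
Lemma f1_linv x : f1 (linv x) = f1 x. Proof. by []. Qed.

Lemma red_filter w : red (filter f1 (red w)) = red (filter f1 w).
Proof.
elim: w => [|x w IH] //. rewrite redE.
have H : forall r, red (filter f1 (push x r)) = red (filter f1 (x :: r)).
  case=> [|y r] //=. case: eqP => [->|_] //=. rewrite f1_linv. case: (f1 x) => //.
  by rewrite !redE push_cancel ?reduced_red.
rewrite H /=. case: (f1 x) => //. by rewrite !redE IH.
Qed.

Definition fil w := red (filter f1 w).
Lemma fil_red w : fil (red w) = fil w. Proof. exact: red_filter. Qed.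
Lemma fil_cat u v : fil (u ++ v) = red (fil u ++ fil v).
Proof. by rewrite /fil filter_cat red_catl red_catr. Qed.
Lemma fil_flatten ls : fil (flatten ls) = red (flatten (map fil ls)).
Proof. elim: ls => [|l ls IH] //=. by rewrite fil_cat IH red_catr. Qed.
Lemma fil_fprod ls : fil (fprod ls) = fil (flatten ls).
Proof. by rewrite fprodE fil_red. Qed.

Definition cl (c : ab) := if c is ab_a then 0 else 1.
Definition R p (w : seq ab) : word := map (fun c => ((cl c, p), false)) w.
Lemma pos_R p w : pos (R p w). Proof. by elim: w. Qed.
Lemma R_inj p : injective (R p).
Proof. apply: inj_map => c d [] /=; by case: c; case: d. Qed.
Lemma R_cat p u v : R p (u ++ v) = R p u ++ R p v. Proof. exact: map_cat. Qed.
Lemma R_flatten p (g : nat -> seq ab) s :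
  flatten (map (fun j => R p (g j)) s) = R p (flatten (map g s)).
Proof. elim: s => [|j s IH] //=. by rewrite IH R_cat. Qed.

Lemma neg_reduced w : all (fun x => x.2) w -> reduced w.
Proof.
elim: w => [|x w IH] //= /andP [Hx Hw]. rewrite IH // andbT.
case: w Hw {IH} => [|y w] //= /andP [Hy _].
apply: contraTneq Hy => ->. by rewrite /linv /= Hx.
Qed.

Lemma delta_R p w : delta p w = R p w.
Proof.
rewrite /delta fprodE.
have -> : flatten (map (fun c => match c with ab_a => a_ p | ab_b => b_ p end) w) = R p w.
  by elim: w => [|c w IH] //=; rewrite IH; case: c.
exact/red_reduced/pos_reduced/pos_R.
Qed.

Lemma flatten_nseq1 (x : letter) j : flatten (nseq j [:: x]) = nseq j x.
Proof. by elim: j => [|j IH] //=; rewrite IH. Qed.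

Lemma phi_R p j : phi p j = R p (nseq j ab_a ++ [:: ab_b]).
Proof.
rewrite /phi fprodE flatten_cat flatten_nseq1 /=.
have -> : nseq j ((0, p), false) ++ [:: ((1, p), false)] = R p (nseq j ab_a ++ [:: ab_b]).
  by rewrite /R map_cat map_nseq.
exact/red_reduced/pos_reduced/pos_R.
Qed.

Lemma psi_R p j : psi p j = finv (R p (ab_b :: nseq j ab_a)).
Proof.
rewrite /psi fprodE flatten_cat flatten_nseq1 /=.
have -> : nseq j ((0, p), true) ++ [:: ((1, p), true)] = finv (R p (ab_b :: nseq j ab_a)).
  by rewrite /finv /R /= map_nseq map_nseq rev_cons rev_nseq cats1.
apply/red_reduced/neg_reduced.
by rewrite /finv /R /= all_rev /= all_map; elim: j.
Qed.

Lemma b_R p : b_ p = R p [:: ab_b]. Proof. by []. Qed.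
Lemma filter_x k : filter f1 (x_ k) = [::]. Proof. by []. Qed.
Lemma filter_finv l : filter f1 (finv l) = finv (filter f1 l).
Proof.
by rewrite /finv filter_rev filter_map; congr (rev (map _ _)).

Qed.
Lemma filter_R p w : filter f1 (R p w) = if p == 1 then R p w else [::].
Proof.
elim: w => [|c w IH] /=; first by case: (p == 1).
rewrite IH /f1 /=. by case: c; case: (p == 1).
Qed.
Arguments fprod : simpl never.

Ltac simplW := rewrite ?fil_fprod /fil /= ?filter_cat ?filter_finv ?filter_x
  /upj /vpj ?delta_R ?phi_R ?psi_R ?b_R ?filter_finv ?filter_R /=.

Lemma W0 P w : w \in Wset P 0 ->
  fil w.1 = red (finv (R 1 (pv P 1)) ++ R 1 (pu P 1)) /\ fil w.2 = red (R 1 [:: ab_b]).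
Proof.
rewrite /Wset (_ : 0 %/ 4 + 1 = 1) //= inE => /eqP -> /=. simplW.
by rewrite ?cats0; split.
Qed.

Lemma W1 P w : w \in Wset P 1 -> exists2 j, j \in iota 2 (pn P - 2) &
  fil w.1 = red (R 1 (pu P j)) /\ fil w.2 = red (R 1 (nseq j ab_a ++ [:: ab_b])).
Proof.
rewrite /Wset (_ : 1 %/ 4 + 1 = 1) //= => /mapP [j Hj ->]. exists j => //. simplW.
by rewrite ?cats0; split.
Qed.

Lemma W2 P w : w \in Wset P 2 ->
  fil w.1 = red (R 1 (pu P (pn P)) ++ finv (R 1 (pv P (pn P)))) /\
  fil w.2 = red (finv (R 1 [:: ab_b])).
Proof.
rewrite /Wset (_ : 2 %/ 4 + 1 = 1) //= inE => /eqP -> /=. simplW.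
by rewrite ?cats0; split.
Qed.

Lemma W3 P w : w \in Wset P 3 -> exists2 j, j \in iota 2 (pn P - 2) &
  fil w.1 = red (finv (R 1 (pv P j))) /\ fil w.2 = red (finv (R 1 (ab_b :: nseq j ab_a))).
Proof.
rewrite /Wset (_ : 3 %/ 4 + 1 = 1) //= => /mapP [j Hj ->]. exists j => //. simplW.
by rewrite ?cats0; split.
Qed.

Lemma Wnil P y : 4 <= y < 16 -> forall w, w \in Wset P y -> fil w.1 = [::] /\ fil w.2 = [::].
Proof.
move=> Hy w.
have Hp : (y %/ 4 + 1 == 1) = false.
  rewrite addn1 eqSS; apply/negbTE; rewrite -lt0n divn_gt0 //; by case/andP: Hy.
rewrite /Wset. move: Hp; move: (y %/ 4 + 1) => p Hp.
case: (y %% 4) => [|[|[|r]]]; rewrite ?inE; [move/eqP ->|case/mapP => j _ ->|move/eqP ->|case/mapP => j _ ->]; simplW; rewrite Hp.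
all: by rewrite /f1 /= ?Hp.
Qed.

Lemma extract (l : seq (word * word)) (s : seq nat) (F1 F2 : nat -> word) :
  (forall w, w \in l -> exists2 j, j \in s & fil w.1 = red (F1 j) /\ fil w.2 = red (F2 j)) ->
  exists2 J, all (fun j => j \in s) J &
    fil (flatten (map fst l)) = red (flatten (map F1 J)) /\
    fil (flatten (map snd l)) = red (flatten (map F2 J)).
Proof.
elim: l => [|w l IH] H; first by exists [::].
have [j Hj [E1 E2]] := H w (mem_head _ _).
have [J HJ [E3 E4]] := IH (fun w' Hw' => H w' (predU1r w' w Hw')).
exists (j :: J); first by rewrite /= Hj HJ.
by rewrite /= !fil_cat E1 E2 E3 E4 !red_catl !red_catr.
Qed.

Lemma nil_ext (l : seq (word * word)) :
  (forall w, w \in l -> fil w.1 = [::] /\ fil w.2 = [::]) ->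
  fil (flatten (map fst l)) = [::] /\ fil (flatten (map snd l)) = [::].
Proof.
elim: l => [|w l IH] H; first by split.
have [E1 E2] := H w (mem_head _ _).
have [E3 E4] := IH (fun w' Hw' => H w' (predU1r w' w Hw')).
by rewrite /= !fil_cat E1 E2 E3 E4.
Qed.

Lemma rot16 (T : Type) (g : nat -> T) i : i < 16 ->
  [seq g ((i + k) %% 16) | k <- iota 0 16] = rot i [seq g k | k <- iota 0 16].
Proof. by do 16 (case: i => [_|i]; first reflexivity). Qed.

Lemma cycle_red (h : nat -> word) i : i < 16 ->
  red (flatten [seq h ((i + k) %% 16) | k <- iota 0 16]) = [::] ->
  red (flatten [seq h k | k <- iota 0 16]) = [::].
Proof.
move=> Hi; rewrite rot16 // /rot flatten_cat => H.
rewrite -(cat_take_drop i [seq h k | k <- iota 0 16]) flatten_cat.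
exact: red_conj.
Qed.

Lemma fprod_map2 (h : nat -> seq word) s :
  fprod [seq fprod (h k) | k <- s] = red (flatten [seq flatten (h k) | k <- s]).
Proof.
rewrite fprodE.
have -> : [seq fprod (h k) | k <- s] = map red [seq flatten (h k) | k <- s].
  by rewrite -map_comp; apply: eq_map => k; rewrite fprodE.
by rewrite red_flatten_red.
Qed.

Lemma nseq_b_inj j k (X Y : seq ab) :
  nseq j ab_a ++ ab_b :: X = nseq k ab_a ++ ab_b :: Y -> j = k /\ X = Y.
Proof.
elim: j k => [|j IH] [|k] /=; try by case.
by case=> /IH [-> ->].
Qed.

Definition blk (j : nat) := nseq j ab_a ++ [:: ab_b].
Definition Dk (j : nat) := ab_b :: nseq j ab_a.

Lemma E_inj J K : flatten (map blk J) = flatten (map blk K) -> J = K.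
Proof.
elim: J K => [|j J IH] [|k K] //=.
- by case: k.
- by case: j.
- by rewrite /blk -!catA /= => /nseq_b_inj [-> /IH ->].
Qed.

Lemma shift (J : seq nat) : ab_b :: flatten (map blk J) = flatten (map Dk J) ++ [:: ab_b].
Proof. elim: J => [|j J IH] //=. by rewrite /blk /Dk -!catA -IH. Qed.

Lemma finv_flatten (g : nat -> word) s :
  flatten (map (fun j => finv (g j)) s) = finv (flatten (map g (rev s))).
Proof.
elim: s => [|j s IH] //=. by rewrite rev_cons map_rcons flatten_rcons finv_cat IH.
Qed.

Lemma second_comp J1 J3 :
  red (R 1 [:: ab_b] ++ (flatten (map (fun j => R 1 (blk j)) J1) ++
     (finv (R 1 [:: ab_b]) ++ flatten (map (fun j => finv (R 1 (Dk j))) J3)))) = [::] ->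
  J3 = rev J1.
Proof.
rewrite R_flatten catA -R_cat finv_flatten R_flatten -finv_cat -R_cat.
rewrite cat1s shift => /(pos_eq (pos_R _ _) (pos_R _ _)) /R_inj.
rewrite -!shift => [[]] /E_inj ->. by rewrite revK.
Qed.

Lemma first_comp P J :
  red (finv (R 1 (pv P 1)) ++ (R 1 (pu P 1) ++ (flatten (map (fun j => R 1 (pu P j)) J) ++
       (R 1 (pu P (pn P)) ++ (finv (R 1 (pv P (pn P))) ++
        flatten (map (fun j => finv (R 1 (pv P j))) (rev J))))))) = [::] ->
  pu P 1 ++ flatten (map (pu P) J) ++ pu P (pn P) = pv P 1 ++ flatten (map (pv P) J) ++ pv P (pn P).
Proof.
move/red_conj. rewrite finv_flatten revK !R_flatten => H.
apply: R_inj; apply: (pos_eq (pos_R _ _) (pos_R _ _)); rewrite -H; congr red.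
by rewrite !R_cat !finv_cat -!catA.
Qed.

Definition G1 P (J1 J3 : seq nat) (y : nat) : word :=
  match y with
  | 0 => finv (R 1 (pv P 1)) ++ R 1 (pu P 1)
  | 1 => flatten (map (fun j => R 1 (pu P j)) J1)
  | 2 => R 1 (pu P (pn P)) ++ finv (R 1 (pv P (pn P)))
  | 3 => flatten (map (fun j => finv (R 1 (pv P j))) J3)
  | _ => [::]
  end.
Definition G2 (J1 J3 : seq nat) (y : nat) : word :=
  match y with
  | 0 => R 1 [:: ab_b]
  | 1 => flatten (map (fun j => R 1 (blk j)) J1)
  | 2 => finv (R 1 [:: ab_b])
  | 3 => flatten (map (fun j => finv (R 1 (Dk j))) J3)
  | _ => [::]
  end.

Lemma assemble (F G : nat -> word) :
  (forall y, y < 16 -> fil (F y) = red (G y)) ->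
  red (flatten [seq F k | k <- iota 0 16]) = [::] ->
  red (flatten [seq G k | k <- iota 0 16]) = [::].
Proof.
move=> HFG H.
have := congr1 fil H; rewrite fil_red fil_flatten.
have -> : map fil [seq F k | k <- iota 0 16] = map red [seq G k | k <- iota 0 16].
  rewrite -!map_comp; apply/eq_in_map => y; rewrite mem_iota => /andP [_ Hy].
  exact: HFG.
by rewrite red_flatten_red.
Qed.

Arguments R : simpl never.
Arguments finv : simpl never.
Arguments pu : simpl never.
Arguments pv : simpl never.

Theorem mainTheorem2 (P : seq (seq ab * seq ab)) :
  3 <= size P ->
  (forall l : seq nat, ~ rpcp_solution P l) ->
  forall Q : word * word, is_cycle P Q -> Q <> ([::], [::]).
Proof.
move=> H3 Hno Q [i [ws [Hi [Hws HQ]]]] HQ0.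
have C1 : red (flatten [seq flatten (map fst (ws k)) | k <- iota 0 16]) = [::].
  have E : fprod [seq fprod (map fst (ws ((i + k) %% 16))) | k <- iota 0 16] = [::].
    transitivity Q.1; last by rewrite HQ0.
    by rewrite HQ /pairprod /=.
  rewrite fprod_map2 in E. exact: (cycle_red Hi E).
have C2 : red (flatten [seq flatten (map snd (ws k)) | k <- iota 0 16]) = [::].
  have E : fprod [seq fprod (map snd (ws ((i + k) %% 16))) | k <- iota 0 16] = [::].
    transitivity Q.2; last by rewrite HQ0.
    by rewrite HQ /pairprod /=.
  rewrite fprod_map2 in E. exact: (cycle_red Hi E).
have [w0 Hw0 E0] : exists2 w, w \in Wset P 0 & ws 0 = [:: w].
  have [Ha Hs] := Hws 0 erefl. have Hs' := Hs erefl.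
  case: (ws 0) Ha Hs' => [|w [|w' l]] Ha Hs'; try discriminate.
  exists w => //. by move: Ha => /= /andP [].
have [w2 Hw2 E2] : exists2 w, w \in Wset P 2 & ws 2 = [:: w].
  have [Ha Hs] := Hws 2 erefl. have Hs' := Hs erefl.
  case: (ws 2) Ha Hs' => [|w [|w' l]] Ha Hs'; try discriminate.
  exists w => //. by move: Ha => /= /andP [].
have [J1 HJ1 [E11 E12]] := extract (l := ws 1) (s := iota 2 (pn P - 2))
  (F1 := fun j => R 1 (pu P j)) (F2 := fun j => R 1 (blk j))
  (fun w Hw => W1 (allP (Hws 1 erefl).1 w Hw)).
have [J3 HJ3 [E31 E32]] := extract (l := ws 3) (s := iota 2 (pn P - 2))
  (F1 := fun j => finv (R 1 (pv P j))) (F2 := fun j => finv (R 1 (Dk j)))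
  (fun w Hw => W3 (allP (Hws 3 erefl).1 w Hw)).
have HG : forall y, y < 16 ->
    fil (flatten (map fst (ws y))) = red (G1 P J1 J3 y) /\
    fil (flatten (map snd (ws y))) = red (G2 J1 J3 y).
  move=> y Hy. case: y Hy => [|[|[|[|y]]]] Hy.
  - rewrite E0 /= !cats0. exact: W0.
  - by split.
  - rewrite E2 /= !cats0. exact: W2.
  - by split.
  - apply: nil_ext => w Hw. apply: (Wnil (y := y.+4)) => //. exact: (allP (Hws _ Hy).1).
have K1 := assemble (fun y Hy => (HG y Hy).1) C1.
have K2 := assemble (fun y Hy => (HG y Hy).2) C2.
rewrite /= ?cats0 in K1 K2.
have HJ : J3 = rev J1 := @second_comp J1 J3 K2.
rewrite HJ -!catA in K1.
apply: (Hno J1); split; last exact: first_comp K1.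
apply/allP => j Hj. have := allP HJ1 j Hj. rewrite mem_iota subnKC; last exact: ltnW.
case/andP => -> Hjn /=. rewrite leq_subRL ?addn1 //. exact: ltnW (leq_trans _ H3).
Qed.
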